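(* Let $k$ be a field and let $X$ be a $\mathcal{T}$-space. Then $\rho^{-1}\circ\rho_*\simeq\mathrm{id}_{\mathrm{Mod}(k_X)}$. In particular the functor $\rho_*:\mathrm{Mod}(k_X)\to\mathrm{Mod}(k_\mathcal{T})$ is fully faithful.
   Context: Let $X$ be a topological space and $\mathcal{T}$ a family of open subsets of $X$. A $\mathcal{T}$-subset of $X$ is a finite Boolean combination of elements of $\mathcal{T}$; a $\mathcal{T}$-connected subset is a $\mathcal{T}$-subset which is not the disjoint union of two proper $\mathcal{T}$-subsets that are both open and closed in it. $X$ is a $\mathcal{T}$-space if (i) $\mathcal{T}$ is a basis of the topology of $X$ and $\emptyset\in\mathcal{T}$; (ii) $\mathcal{T}$ is closed under finite unions and finite intersections; (iii) every $U\in\mathcal{T}$ has finitely many $\mathcal{T}$-connected components. $X_\mathcal{T}$ is the site whose underlying category is $\mathcal{T}$ (morphisms are inclusions), a family $\{U_i\}\subset\mathcal{T}$ of subsets of $U\in\mathcal{T}$ being a covering of $U$ iff it admits a finite subfamily whose union is $U$. $\mathrm{Mod}(k_\mathcal{T})$ (resp. $\mathrm{Mod}(k_X)$) is the category of sheaves of $k$-vector spaces on $X_\mathcal{T}$ (resp. $X$). $\rho:X\to X_\mathcal{T}$ is the natural morphism of sites, $\rho_*F(U)=F(U)$ for $U\in\mathcal{T}$, and $\rho^{-1}$ is the left adjoint of $\rho_*$. *)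

(* Defs.v *)
From HB Require Import structures.
From mathcomp Require Import all_boot all_algebra.
From mathcomp Require Import boolp classical_sets topology.
Set Implicit Arguments. Unset Strict Implicit. Unset Printing Implicit Defensive.
Import GRing.Theory.
Local Open Scope classical_set_scope.
Local Open Scope ring_scope.

Section Defs.
Variable X : topologicalType.

Inductive Tsubset (T : set (set X)) : set X -> Prop :=
| Tsub_base U : T U -> Tsubset T U
| Tsub_compl A : Tsubset T A -> Tsubset T (~` A)
| Tsub_union A B : Tsubset T A -> Tsubset T B -> Tsubset T (A `|` B).

Definition open_in (Z A : set X) : Prop := exists O, open O /\ A = Z `&` O.
Definition closed_in (Z A : set X) : Prop := A `<=` Z /\ open_in Z (Z `\` A).
Definition clopen_in (Z A : set X) : Prop := open_in Z A /\ closed_in Z A.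

Definition Tconnected (T : set (set X)) (Z : set X) : Prop :=
  Tsubset T Z /\
  ~ (exists A B : set X,
        Tsubset T A /\ Tsubset T B /\ A <> Z /\ B <> Z /\
        A `|` B = Z /\ A `&` B = set0 /\ clopen_in Z A /\ clopen_in Z B).

(* U is the disjoint union of finitely many nonempty T-connected T-subsets,
   each open and closed in U (these are then its T-connected components) *)
Definition finite_Tcomponents (T : set (set X)) (U : set X) : Prop :=
  exists s : seq (set X),
    [/\ U = \bigcup_(V in [set` s]) V,
        (forall V, V \in s -> [/\ V !=set0, Tconnected T V & clopen_in U V]) &
        (forall i j, (i < size s)%N -> (j < size s)%N -> i <> j ->
           nth set0 s i `&` nth set0 s j = set0)].

Definition Tspace (T : set (set X)) : Prop :=
  [/\
      (forall U, T U -> open U),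
      (forall U, open U -> forall x, U x -> exists V, [/\ T V, V x & V `<=` U]),
      T set0,
      (forall U V, T U -> T V -> T (U `|` V)) /\ (forall U V, T U -> T V -> T (U `&` V)) &
      (forall U, T U -> finite_Tcomponents T U)].

Variable k : fieldType.

Record presheaf := Presheaf {
  sec : set X -> lmodType k;
  res : forall U V : set X, V `<=` U -> sec U -> sec V }.

Arguments res p [U V] _ _.

(* presheaf axioms on the category of subsets in Ob (morphisms = inclusions) *)
Definition is_presheaf (Ob : set (set X)) (F : presheaf) : Prop :=
  [/\ (forall U V (h : V `<=` U), Ob U -> Ob V ->
         forall (a : k) (s t : sec F U), res F h (a *: s + t) = a *: res F h s + res F h t),
      (forall U (h : U `<=` U), Ob U -> forall s, res F h s = s) &
      (forall U V W (hVU : V `<=` U) (hWV : W `<=` V) (hWU : W `<=` U),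
         Ob U -> Ob V -> Ob W -> forall s, res F hWV (res F hVU s) = res F hWU s)].

Definition glue_cond (F : presheaf) (U : set X) (I : Type) (Ui : I -> set X)
    (hs : forall i, Ui i `<=` U) : Prop :=
  forall s : forall i, sec F (Ui i),
    (forall i j, res F (@subIsetl _ (Ui i) (Ui j)) (s i)
               = res F (@subIsetr _ (Ui i) (Ui j)) (s j)) ->
    exists t : sec F U, (forall i, res F (hs i) t = s i) /\
      (forall t' : sec F U, (forall i, res F (hs i) t' = s i) -> t' = t).

Definition sheafX (F : presheaf) : Prop :=
  is_presheaf open F /\
  forall U, open U -> forall (I : Type) (Ui : I -> set X),
    (forall i, open (Ui i)) -> forall hs : (forall i, Ui i `<=` U),
    \bigcup_i Ui i = U -> @glue_cond F U I Ui hs.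

(* sheaves on the site X_T: coverings are families in T admitting a finite
   subfamily whose union is U *)
Definition sheafT (T : set (set X)) (F : presheaf) : Prop :=
  is_presheaf T F /\
  forall U, T U -> forall (I : Type) (Ui : I -> set X),
    (forall i, T (Ui i)) -> forall hs : (forall i, Ui i `<=` U),
    (exists (n : nat) (j : 'I_n -> I), \bigcup_(m in [set: 'I_n]) Ui (j m) = U) -> @glue_cond F U I Ui hs.

Definition mor (F G : presheaf) := forall U, sec F U -> sec G U.

Definition is_mor (Ob : set (set X)) (F G : presheaf) (f : mor F G) : Prop :=
  (forall U, Ob U -> forall (a : k) (s t : sec F U), f U (a *: s + t) = a *: f U s + f U t) /\
  (forall U V (h : V `<=` U), Ob U -> Ob V -> forall s, f V (res F h s) = res G h (f U s)).

Definition mor_eq (Ob : set (set X)) (F G : presheaf) (f g : mor F G) : Prop :=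
  forall U, Ob U -> forall s, f U s = g U s.

Definition mor_comp (F G H : presheaf) (f : mor F G) (g : mor G H) : mor F H :=
  fun U s => g U (f U s).

Definition mor_id (F : presheaf) : mor F F := fun U s => s.

(* rho_* : Mod(k_X) -> Mod(k_T), (rho_* F)(U) = F(U) for U in T *)
Definition rho_push (F : presheaf) : presheaf := F.
Definition rho_push_mor (F G : presheaf) (f : mor F G) : mor (rho_push F) (rho_push G) := f.

(* (L, eta) is a left adjoint of rho_* (given by universal arrows):
   for every sheaf G on X_T, L G is a sheaf on X, eta G : G -> rho_* (L G) and
   every morphism G -> rho_* F (F a sheaf on X) factors uniquely through eta G. *)
Definition left_adjoint_rho (T : set (set X)) (L : presheaf -> presheaf)
    (eta : forall G, mor G (rho_push (L G))) : Prop :=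
  forall G, sheafT T G ->
    [/\ sheafX (L G), is_mor T (eta G) &
        forall F, sheafX F -> forall psi : mor G (rho_push F), is_mor T psi ->
          exists phi : mor (L G) F,
            [/\ is_mor open phi,
                mor_eq T (mor_comp (eta G) (rho_push_mor phi)) psi &
                forall phi' : mor (L G) F, is_mor open phi' ->
                  mor_eq T (mor_comp (eta G) (rho_push_mor phi')) psi ->
                  mor_eq open phi' phi]].

Definition is_isoX (F G : presheaf) (f : mor F G) : Prop :=
  is_mor open f /\ exists g : mor G F,
    [/\ is_mor open g, mor_eq open (mor_comp f g) (@mor_id F) &
        mor_eq open (mor_comp g f) (@mor_id G)].

End Defs.
Arguments res [X k] p [U V] _ _.
Arguments mor_id [X k] F _ _.
Arguments left_adjoint_rho [X k] T L eta.
Arguments is_mor [X k] Ob [F G] f.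
Arguments mor_eq [X k] Ob [F G] f g.
Arguments is_isoX [X k F G] f.
Arguments sheafX [X k] F.
Arguments sheafT [X k] T F.

(* Main.v *)
Require Import Defs.
From HB Require Import structures.
From mathcomp Require Import all_boot all_algebra.
From mathcomp Require Import boolp classical_sets topology.
Local Open Scope classical_set_scope.

Section Helpers.
Variables (X : topologicalType) (k : fieldType).

Lemma res_pi (G : presheaf X k) U V (p q : V `<=` U) s : res G p s = res G q s.
Proof. by rewrite (Prop_irrelevance p q). Qed.

Lemma rescomp {Ob : set (set X)} {G : presheaf X k} : is_presheaf Ob G ->
  forall U V W (hVU : V `<=` U) (hWV : W `<=` V), Ob U -> Ob V -> Ob W ->
  forall s, res G hWV (res G hVU s) = res G (fun x h => hVU x (hWV x h)) s.
Proof. rewrite /is_presheaf; by move=> [_ _ Hc] U V W hVU hWV oU oV oW s; exact: Hc. Qed.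

Lemma sheaf_sep (G : presheaf X k) : sheafX G -> forall U, open U ->
  forall (I : Type) (Ui : I -> set X), (forall i, open (Ui i)) ->
  forall hs : (forall i, Ui i `<=` U), \bigcup_i Ui i = U ->
  forall t t' : sec G U, (forall i, res G (hs i) t = res G (hs i) t') -> t = t'.
Proof.
move=> [HP Hg] U oU I Ui oi hs cov t t' Heq.
have [|t0 [_ Hu]] := Hg U oU I Ui oi hs cov (fun i => res G (hs i) t').
  move=> i j; rewrite !(rescomp HP) //; try exact: openI.
  exact: res_pi.
by rewrite (Hu t Heq) (Hu t' (fun i => erefl)).
Qed.

Lemma is_mor_id Ob (F : presheaf X k) : is_mor Ob (mor_id F).
Proof. by split. Qed.

Lemma is_mor_comp Ob (F G H : presheaf X k) (f : mor F G) (g : mor G H) :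
  is_mor Ob f -> is_mor Ob g -> is_mor Ob (mor_comp f g).
Proof.
rewrite /is_mor; move=> [f1 f2] [g1 g2]; split.
  by move=> U oU a s t; rewrite /mor_comp f1 // g1.
by move=> U V h oU oV s; rewrite /mor_comp f2 // g2.
Qed.

Variable T : set (set X).
Hypothesis HT : Tspace T.

Definition IU (U : set X) := {V : set X | T V /\ V `<=` U}.
Definition hsI U (i : IU U) : sval i `<=` U := proj2 (svalP i).

Arguments hsI {U} i.

Lemma T_open U : T U -> open U.
Proof. by case: HT => H _ _ _ _; apply: H. Qed.

Lemma IU_open U (i : IU U) : open (sval i).
Proof. exact: T_open (proj1 (svalP i)). Qed.

Arguments IU_open {U} i.

Lemma IU_cov U : open U -> \bigcup_(i in [set: IU U]) sval i = U.
Proof.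
move=> oU; apply/seteqP; split => x.
  by move=> [i _ Hx]; exact: hsI Hx.
move=> Ux; case: HT => _ Hb _ _ _.
have [V [TV Vx VU]] := Hb U oU x Ux.
by exists (exist _ V (conj TV VU)).
Qed.

Arguments IU_cov {U}.

Lemma ext_uniq (F G : presheaf X k) : sheafX G ->
  forall f g : mor F G, is_mor open f -> is_mor open g ->
  mor_eq T f g -> mor_eq open f g.
Proof.
move=> HG f g [_ f2] [_ g2] Heq U oU s.
apply: (@sheaf_sep G HG U oU (IU U) sval (@IU_open U) (@hsI U) (@IU_cov U oU)) => i.
rewrite -(f2 U (sval i) (hsI i) oU (IU_open i)).
rewrite -(g2 U (sval i) (hsI i) oU (IU_open i)).
by rewrite Heq //; exact: (proj1 (svalP i)).
Qed.

Lemma sheafX_sheafT (F : presheaf X k) : sheafX F -> sheafT T F.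
Proof.
move=> [[H1 H2 H3] Hg]; split.
  split.
  - by move=> U V h oU oV; apply: H1; exact: T_open.
  - by move=> U h oU; apply: H2; exact: T_open.
  - by move=> U V W hVU hWV hWU oU oV oW; apply: H3; exact: T_open.
move=> U TU I Ui Ti hs [n [j Hj]].
apply: Hg; first exact: T_open.
  by move=> i; exact: T_open.
apply/seteqP; split => x.
  by move=> [i _ Hx]; exact: hs Hx.
rewrite -{1}Hj => -[m _ Hx]; by exists (j m).
Qed.

Section Ext.
Variables (F G : presheaf X k).
Hypotheses (HF : sheafX F) (HG : sheafX G).
Variable h : mor F G.
Hypothesis Hh : is_mor T h.

Definition Pext U (s : sec F U) (t : sec G U) :=
  forall V (TV : T V) (hVU : V `<=` U), res G hVU t = h V (res F hVU s).

Arguments Pext {U}.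

Lemma Pext_uniq U : open U -> forall (s : sec F U) (t t' : sec G U), Pext s t -> Pext s t' -> t = t'.
Proof.
move=> oU s t t' P1 P2.
apply: (@sheaf_sep G HG U oU (IU U) sval (@IU_open U) (@hsI U) (@IU_cov U oU)) => i.
by rewrite P1 ?P2 //; exact: (proj1 (svalP i)).
Qed.

Arguments Pext_uniq {U}.

Lemma Pext_ex U : open U -> forall s : sec F U, exists t, Pext s t.
Proof.
move=> oU s.
case: HF => HPF _; case: HG => HPG Hg.
case: HT => Topen _ _ [_ TI] _.
have [|t [Ht _]] := Hg U oU (IU U) sval (@IU_open U) (@hsI U) (@IU_cov U oU)
   (fun i => h (sval i) (res F (hsI i) s)).
  move=> i j.
  have Ti := proj1 (svalP i); have Tj := proj1 (svalP j).
  have Tij : T (sval i `&` sval j) by exact: TI.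
  case: Hh => _ Hn.
  rewrite -!Hn // !(rescomp HPF) //; try exact: Topen.
  by congr (h _ _); exact: res_pi.
exists t => V TV hVU.
have oV := Topen _ TV.
set i := exist (fun V => T V /\ V `<=` U) V (conj TV hVU).
have := Ht i; rewrite /= => Hi.
by rewrite (@res_pi G U V hVU (hsI i)) Hi; congr (h _ _); exact: res_pi.
Qed.

Definition ext : mor F G := fun U s =>
  match pselect (open U) with
  | left oU => sval (cid (@Pext_ex U oU s))
  | right _ => 0%R
  end.

Lemma ext_spec U : open U -> forall s : sec F U, Pext s (ext U s).
Proof.
move=> oU s; rewrite /ext; case: pselect => // oU'.
exact: svalP (cid (@Pext_ex U oU' s)).
Qed.

Arguments ext_spec {U}.

Lemma ext_eq U : open U -> forall (s : sec F U) (t : sec G U), Pext s t -> ext U s = t.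
Proof. move=> oU s t Pt; exact: Pext_uniq oU s _ _ (ext_spec oU s) Pt. Qed.

Lemma ext_mor : is_mor open ext /\ mor_eq T ext h.
Proof.
case: HF => HPF _; case: HG => HPG _.
case: HT => Topen _ _ _ _.
case: Hh => hl hn.
case: (HPF) => Fl _ _; case: (HPG) => Gl _ _.
split; first split.
- move=> U oU a s t; apply: ext_eq => // V TV hVU.
  rewrite Gl //; last exact: Topen.
  rewrite !ext_spec // Fl //; last exact: Topen.
  by rewrite hl.
- move=> U W hWU oU oW s; apply: ext_eq => // V TV hVW.
  rewrite (rescomp HPG) //; last exact: Topen.
  rewrite ext_spec // (rescomp HPF) //; exact: Topen.
- move=> U TU s; apply: ext_eq; first exact: Topen.
  by move=> V TV hVU; rewrite hn.
Qed.
End Ext.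

End Helpers.
Arguments ext_uniq {X k T} HT {F G} HG {f g}.
Arguments ext_mor {X k T} HT {F G} HF HG {h} Hh.
Arguments ext {X k T} HT {F G} HF HG {h} Hh.
Arguments sheafX_sheafT {X k T} HT {F}.
Arguments is_mor_comp {X k Ob F G H f g}.
Arguments is_mor_id {X k} Ob F.

Theorem mainTheorem11 (k : fieldType) (X : topologicalType) (T : set (set X))
    (HT : Tspace T)
    (L : presheaf X k -> presheaf X k) (eta : forall G, mor G (rho_push (L G)))
    (Hadj : left_adjoint_rho T L eta) :
  (* rho^{-1} o rho_* ~= id : the counit L (rho_* F) -> F is an isomorphism *)
  (forall F : presheaf X k, sheafX F ->
     forall eps : mor (L (rho_push F)) F, is_mor open eps ->
       mor_eq T (mor_comp (eta (rho_push F)) (rho_push_mor eps)) (mor_id (rho_push F)) ->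
       is_isoX eps) /\
  (* rho_* is fully faithful *)
  (forall F G : presheaf X k, sheafX F -> sheafX G ->
     (forall f g : mor F G, is_mor open f -> is_mor open g ->
        mor_eq T (rho_push_mor f) (rho_push_mor g) -> mor_eq open f g) /\
     (forall h : mor (rho_push F) (rho_push G), is_mor T h ->
        exists f : mor F G, is_mor open f /\ mor_eq T (rho_push_mor f) h)).
Proof.
split; last first.
  move=> F G HF HG; split.
    by move=> f g Hf Hg Heq; exact: (ext_uniq HT HG Hf Hg Heq).
  move=> h Hh; exists (ext HT HF HG Hh); exact: ext_mor.
move=> F HF eps Heps Hid.
have [HL Heta Huniv] := Hadj F (sheafX_sheafT HT HF).
have [Hg Hgeta] := ext_mor HT HF HL Heta.
set g := ext HT HF HL Heta in Hg Hgeta.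
split => //; exists g; split => //.
- have [phi [_ _ Hphi]] := Huniv _ HL (eta F) Heta.
  have E1 := Hphi _ (is_mor_comp Heps Hg).
  have E2 := Hphi _ (is_mor_id open (L F)).
  move=> U oU s.
  rewrite E1 //; last first.
    move=> V TV t; rewrite /mor_comp /rho_push_mor.
    have := Hid V TV t; rewrite /mor_comp /rho_push_mor /mor_id => ->.
    exact: Hgeta.
  by rewrite E2.
- apply: (ext_uniq HT HF (is_mor_comp Hg Heps) (is_mor_id open F)).
  move=> V TV t; rewrite /mor_comp Hgeta //.
  exact: Hid.
Qed.
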